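(* Let $D$ be an arbitrary subset of $\mathbb{Z}^d$ and $g$ a function in $\ell^1(D)$. Let $k,t$ be positive integers with $k<t$ and let $r>0$. For any $x\in\overline D$, $$P\Big(\Big\|\frac1tL^D_t-g^2\Big\|_{1,D}\le r,\ \tau<\infty\Big)\le\frac{2\,P_x\Big(\Big\|\frac1tL^D_t-g^2\Big\|_{1,D}\le r+4\frac{k}{t-k},\ \tau<\infty\Big)}{P_x(S_k=0)+P_x(S_{k-1}=0)}.$$
   Context: $P_x$ is the law of the simple random walk $(S_j)$ on $\mathbb{Z}^d$ started at $x$, $P=P_0$. $L_j(y)=\sum_{i=0}^{j-1}1_{\{S_i=y\}}$, $L_j(D)=\sum_{y\in D}L_j(y)$, $\tau=\tau(D,t)=\inf\{j\ge1:L_j(D)=t\}$, and $L^D_t(y)=L_{\tau(D,t)}(y)$ for $y\in D$. $\|f\|_{1,D}=\sum_{y\in D}|f(y)|$. $\overline D=D\cup\{x:\exists y\in D,|x-y|=1\}$. *)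

(* Defs.v *)
From HB Require Import structures.
From mathcomp Require Import all_boot all_order all_algebra.
From mathcomp Require Import all_classical all_reals all_analysis.
Set Implicit Arguments. Unset Strict Implicit. Unset Printing Implicit Defensive.
Import Order.TTheory GRing.Theory Num.Theory.
Local Open Scope classical_set_scope.
Local Open Scope ring_scope.

Definition Zd (d : nat) := 'rV[int]_d.

(* A step of the simple random walk: a coordinate and a sign (2d choices). *)
Definition step (d : nat) := ('I_d * bool)%type.

Definition stepv d (s : step d) : Zd d :=
  \row_i (if i == s.1 then (if s.2 then 1 else -1) else 0).

Definition walk_pos d (x : Zd d) (w : seq (step d)) (j : nat) : Zd d :=
  x + \sum_(s <- take j w) stepv s.

Definition loc_time d (x : Zd d) (w : seq (step d)) (j : nat) (y : Zd d) : nat :=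
  \sum_(i < j) (walk_pos x w i == y).

Definition loc_time_set d (x : Zd d) (w : seq (step d)) (j : nat)
  (D : set (Zd d)) : nat :=
  \sum_(i < j) (walk_pos x w i \in D).

(* tau(D,t) = n, i.e. n = inf {j >= 1 : L_j(D) = t} *)
Definition tau_is d (D : set (Zd d)) (t : nat) (x : Zd d) (w : seq (step d))
  (n : nat) : bool :=
  [&& (0 < n)%N, loc_time_set x w n D == t &
      [forall j : 'I_n, (0 < j)%N ==> (loc_time_set x w j D != t)]].

(* P_x(E, tau < oo) for an event E on L^D_t = L_tau(.):
   sum over n of the probability of the length-n cylinder paths with tau = n
   and E(L_n), each cylinder having probability (2d)^{-n}. *)
Definition stopped_prob {R : realType} d (D : set (Zd d)) (t : nat) (x : Zd d)
  (E : (Zd d -> nat) -> Prop) : \bar R :=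
  (\sum_(n <oo)
     (\sum_(w : n.-tuple (step d) | tau_is D t x w n && `[< E (loc_time x w n) >])
        ((2 * d)%:R ^- n : R))%:E)%E.

Definition hit_prob {R : realType} d (x : Zd d) (k : nat) (y : Zd d) : R :=
  \sum_(w : k.-tuple (step d) | walk_pos x w k == y) ((2 * d)%:R ^- k).

Definition l1normD (R : realType) d (D : set (Zd d)) (f : Zd d -> R) : \bar R :=
  (\esum_(y in D) (`|f y|)%:E)%E.

Definition close_ev (R : realType) d (D : set (Zd d)) (g : Zd d -> R) (t : nat)
  (r : R) (L : Zd d -> nat) : Prop :=
  (l1normD D (fun y => ((L y)%:R / t%:R - g y ^+ 2)%R) <= r%:E)%E.

Definition Dbar d (D : set (Zd d)) : set (Zd d) :=
  [set x | D x \/ exists2 y, D y & \sum_(i < d) ((x - y) ord0 i) ^+ 2 = 1].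

(* Main.v *)
Require Import Defs.
From HB Require Import structures.
From mathcomp Require Import all_boot all_order all_algebra.
From mathcomp Require Import all_classical all_reals all_analysis.
From mathcomp Require Import zify ring lra.
Import Order.TTheory GRing.Theory Num.Theory.
Local Open Scope classical_set_scope.
Local Open Scope ring_scope.
Section Tup.
Variables (R : realType) (T : finType).

Lemma big_tuple_cons n (F : seq T -> R) :
  \sum_(w : n.+1.-tuple T) F w = \sum_(s : T) \sum_(w : n.-tuple T) F (s :: w).
Proof.
rewrite pair_big /=.
rewrite (reindex (fun p : T * n.-tuple T => [tuple of p.1 :: p.2])) //=.
exists (fun w : n.+1.-tuple T => (thead w, [tuple of behead w])).
- by move=> [s w] _ /=; congr pair; apply: val_inj.
- by move=> w _; rewrite [RHS]tuple_eta; apply: val_inj.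
Qed.

Lemma big_tuple0 (F : seq T -> R) :
  \sum_(w : 0.-tuple T) F w = F [::].
Proof.
rewrite (eq_bigr (fun _ => F [::])); last by move=> w _; rewrite tuple0.
by rewrite sumr_const card_tuple expn0.
Qed.

Lemma big_tuple_take n M (F : seq T -> R) : (n <= M)%N ->
  \sum_(w : M.-tuple T) F (take n w) = (#|T| ^ (M - n))%:R * \sum_(w : n.-tuple T) F w.
Proof.
elim: n M F => [|n IH] M F Hn.
- rewrite big_tuple0 (eq_bigr (fun _ => F [::])); last by move=> w _; rewrite take0.
  by rewrite sumr_const card_tuple mulr_natl subn0.
- case: M Hn => [|M] // Hn.
  rewrite (big_tuple_cons _ (fun w => F (take n.+1 w))) big_tuple_cons mulr_sumr; apply: eq_bigr => s _ /=.
  by rewrite subSS -(IH M (fun w => F (s :: w))).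
Qed.

Lemma big_tuple_cat j M (F : seq T -> R) :
  \sum_(p : j.-tuple T) \sum_(w : M.-tuple T) F (p ++ w) = \sum_(v : (j + M).-tuple T) F v.
Proof.
elim: j F => [|j IH] F.
- by rewrite (big_tuple0 (fun p => \sum_(w : M.-tuple T) F (p ++ w))).
- rewrite (big_tuple_cons _ (fun p => \sum_(w : M.-tuple T) F (p ++ w))).
  change ((j.+1 + M)%N) with ((j + M).+1).
  rewrite big_tuple_cons; apply: eq_bigr => s _.
  exact: (IH (fun v => F (s :: v))).
Qed.

End Tup.

Section Walk.
Variables (d : nat).
Implicit Types (x : Zd d) (w p : seq (step d)) (D : set (Zd d)).

Lemma sum_split_nat a b (G : nat -> nat) :
  (\sum_(i < a + b) G i = \sum_(i < a) G i + \sum_(i < b) G (a + i))%N.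
Proof. by rewrite big_split_ord. Qed.

Lemma walk_take x w n i : (i <= n)%N -> walk_pos x (take n w) i = walk_pos x w i.
Proof. by move=> H; rewrite /walk_pos -take_min (minn_idPl H). Qed.

Lemma lts_take x w D n j : (j <= n)%N ->
  loc_time_set x (take n w) j D = loc_time_set x w j D.
Proof.
move=> H; apply: eq_bigr => i _; rewrite walk_take //.
exact: leq_trans (ltnW (ltn_ord i)) H.
Qed.

Lemma lt_take x w n y : loc_time x (take n w) n y = loc_time x w n y.
Proof. by apply: eq_bigr => i _; rewrite walk_take // ltnW. Qed.

Lemma tau_take D t x w n : tau_is D t x (take n w) n = tau_is D t x w n.
Proof.
rewrite /tau_is lts_take //; congr [&& _, _ & _].
apply: eq_forallb => j; rewrite lts_take // ltnW //.
Qed.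

Lemma walk_cat_le x p w i : (i <= size p)%N -> walk_pos x (p ++ w) i = walk_pos x p i.
Proof.
move=> H; rewrite /walk_pos take_cat; case: ltnP => // H2.
have E : i = size p by apply/eqP; rewrite eqn_leq H H2.
by rewrite E subnn take0 cats0 take_size.
Qed.

Lemma walk_cat x p w i :
  walk_pos x (p ++ w) (size p + i) = walk_pos (walk_pos x p (size p)) w i.
Proof.
rewrite /walk_pos take_cat ltnNge leq_addr /= addKn big_cat /= take_size addrA //.
Qed.

Lemma lts_le x w D i : (loc_time_set x w i D <= i)%N.
Proof.
rewrite /loc_time_set -[X in (_ <= X)%N](card_ord i) -sum1_card.
by apply: leq_sum => j _; exact: leq_b1.
Qed.

Lemma lts_S x w D i :
  loc_time_set x w i.+1 D = (loc_time_set x w i D + (walk_pos x w i \in D))%N.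
Proof. by rewrite /loc_time_set big_ord_recr. Qed.

Lemma lts_0 x w D : loc_time_set x w 0 D = 0%N.
Proof. by rewrite /loc_time_set big_ord0. Qed.

Lemma lts_cat x p w D i :
  loc_time_set x (p ++ w) (size p + i) D =
  (loc_time_set x p (size p) D + loc_time_set (walk_pos x p (size p)) w i D)%N.
Proof.
rewrite /loc_time_set (sum_split_nat _ _ (fun l => (walk_pos x (p ++ w) l \in D) : nat)).
congr addn; apply: eq_bigr => l _; first by rewrite walk_cat_le // ltnW.
by rewrite walk_cat.
Qed.

Lemma lt_cat x p w i y :
  loc_time x (p ++ w) (size p + i) y =
  (loc_time x p (size p) y + loc_time (walk_pos x p (size p)) w i y)%N.
Proof.
rewrite /loc_time (sum_split_nat _ _ (fun l => (walk_pos x (p ++ w) l == y) : nat)).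
congr addn; apply: eq_bigr => l _; first by rewrite walk_cat_le // ltnW.
by rewrite walk_cat.
Qed.

Lemma ivt_nat (f : nat -> nat) a n : (f 0 <= a)%N -> (a <= f n)%N ->
  (forall i, f i.+1 <= (f i).+1)%N -> exists2 i, (i <= n)%N & f i = a.
Proof.
move=> H0 Hn Hs; elim: n Hn => [|n IH] Hn.
  by exists 0%N => //; apply/eqP; rewrite eqn_leq H0 Hn.
case: (leqP a (f n)) => H.
  by have [i Hi Hf] := IH H; exists i => //; rewrite ltnW.
exists n.+1 => //; apply/eqP; rewrite eqn_leq Hn andbT.
by have := Hs n; lia.
Qed.

End Walk.

Section Esum.
Variables (R : realType) (d : nat).
Implicit Types (D : set (Zd d)).

Lemma esum_pt D (z : Zd d) (c : R) : 0 < c ->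
  (\esum_(y in D) (((z == y) : nat)%:R / c)%:E <= (((z \in D) : nat)%:R / c)%:E)%E.
Proof.
move=> c0; case: (boolP (z \in D)) => Hz.
- rewrite (esumID [set z]); last by move=> i _; rewrite lee_fin divr_ge0 // ltW.
  rewrite [X in (X + _)%E](_ : _ = (((z == z) : nat)%:R / c)%:E); last first.
    have -> : D `&` [set z] = [set z].
      by apply/seteqP; split => y /=; [case|move=> ->; split=> //; rewrite -inE].
    by rewrite esum_set1 // lee_fin divr_ge0 // ltW.
  rewrite esum1 ?adde0 ?eqxx //.
  move=> y [_ /= Hy]; have /negPf -> : z != y by apply/eqP => E; apply: Hy; rewrite E.
  by rewrite mul0r.
- rewrite esum1 ?mul0r //.
  move=> y Dy; have : z != y by apply: contraNneq Hz => ->; rewrite inE.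
  by move/negPf => ->; rewrite mul0r.
Qed.

Lemma esum_loc D x w a b (c : R) : 0 < c ->
  (\esum_(y in D) ((\sum_(i < b) ((walk_pos x w (a + i) == y) : nat))%:R / c)%:E
   <= ((\sum_(i < b) ((walk_pos x w (a + i) \in D) : nat))%:R / c)%:E)%E.
Proof.
move=> c0.
rewrite (eq_esum (b := fun y => \sum_(i < b) (((walk_pos x w (a + i) == y) : nat)%:R / c)%:E)); last first.
  by move=> y _; rewrite natr_sum mulr_suml sumEFin.
rewrite esum_sum; last by move=> y i _ _; rewrite lee_fin divr_ge0 // ltW.
rewrite natr_sum mulr_suml -sumEFin; apply: lee_sum => i _; exact: esum_pt.
Qed.

Lemma close_main D (g : Zd d -> R) t (r al be : R) (L L' A B C : Zd d -> nat) :
  (0 < t)%N -> (forall y, L' y = A y + C y)%N -> (forall y, L y = C y + B y)%N ->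
  close_ev D g t r L ->
  (\esum_(y in D) ((A y)%:R / t%:R)%:E <= al%:E)%E ->
  (\esum_(y in D) ((B y)%:R / t%:R)%:E <= be%:E)%E ->
  close_ev D g t (r + al + be) L'.
Proof.
move=> t0 HL' HL Hc Ha Hb; rewrite /close_ev /l1normD.
have tp : 0 < t%:R :> R by rewrite ltr0n.
apply: (@le_trans _ _ (\esum_(y in D) (`|(L y)%:R / t%:R - g y ^+ 2|%:E
   + ((A y)%:R / t%:R)%:E + ((B y)%:R / t%:R)%:E))%E).
  apply: le_esum => y _; rewrite -!EFinD lee_fin HL' HL !natrD.
  rewrite !mulrDl.
  set a := (A y)%:R / t%:R; set b := (B y)%:R / t%:R; set cc := (C y)%:R / t%:R.
  have a0 : 0 <= a by rewrite divr_ge0.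
  have b0 : 0 <= b by rewrite divr_ge0.
  have h1 : `|a + cc - g y ^+ 2| <= `|cc - g y ^+ 2| + `|a|.
    by rewrite -addrA addrC; apply: ler_normD.
  have h2 : `|cc - g y ^+ 2| <= `|cc + b - g y ^+ 2| + `|- b|.
    have -> : cc - g y ^+ 2 = (cc + b - g y ^+ 2) + (- b) by ring.
    exact: ler_normD.
  move: h1 h2; rewrite normrN (ger0_norm a0) (ger0_norm b0) => h1 h2.
  lra.
rewrite esumD; last by move=> *; rewrite lee_fin divr_ge0.
  2: by move=> *; rewrite adde_ge0 // lee_fin divr_ge0.
rewrite esumD; [|by []|by move=> *; rewrite lee_fin divr_ge0].
by rewrite !EFinD; apply: leeD => //; apply: leeD.
Qed.

End Esum.

Section Core.
Variables (R : realType) (d : nat).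
Implicit Types (D : set (Zd d)).

Lemma lts_cat_le x (p w : seq (step d)) D i : (i <= size p)%N ->
  loc_time_set x (p ++ w) i D = loc_time_set x p i D.
Proof.
move=> H; apply: eq_bigr => l _; rewrite walk_cat_le //.
exact: leq_trans (ltnW (ltn_ord l)) H.
Qed.

Lemma arith (r : R) (m k t : nat) : (m <= k)%N -> (k < t)%N ->
  r + m%:R / t%:R + m%:R / t%:R <= r + 4 * (k%:R / (t - k)%N%:R).
Proof.
move=> mk kt.
have kt' : k%:R < t%:R :> R by rewrite ltr_nat.
have mk' : m%:R <= k%:R :> R by rewrite ler_nat.
have k0 : 0 <= k%:R :> R by rewrite ler0n.
have t0 : 0 < t%:R :> R by rewrite ltr0n; lia.
rewrite natrB; last exact: ltnW.
have tk : 0 < t%:R - k%:R :> R by rewrite subr_gt0.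
have h1 : m%:R / t%:R <= k%:R / t%:R :> R by rewrite ler_wpM2r // invr_ge0 ltW.
have h2 : (t%:R)^-1 <= (t%:R - k%:R)^-1 :> R.
  rewrite lef_pV2 ?posrE //; lra.
have h3 : k%:R / t%:R <= k%:R / (t%:R - k%:R) :> R by rewrite ler_wpM2l.
have h4 : 0 <= k%:R / (t%:R - k%:R) :> R by rewrite divr_ge0 // ltW.
lra.
Qed.

Lemma sum_split_le a n (G : nat -> nat) : (a <= n)%N ->
  (\sum_(i < n) G i = \sum_(i < a) G i + \sum_(i < n - a) G (a + i))%N.
Proof. by move=> H; have := sum_split_nat a (n - a) G; rewrite subnKC. Qed.

Lemma core D (g : Zd d -> R) t k (r : R) x (p w : seq (step d)) n :
  (size p <= k)%N -> (k < t)%N -> walk_pos x p (size p) = 0 ->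
  tau_is D t 0 w n -> close_ev D g t r (loc_time 0 w n) ->
  exists2 n', (n' <= size p + n)%N &
    tau_is D t x (p ++ w) n' &&
    `[< close_ev D g t (r + 4 * (k%:R / (t - k)%N%:R)) (loc_time x (p ++ w) n') >].
Proof.
move=> pk kt px0 /and3P[n0 /eqP fn /forallP fmin] Hc.
set j := size p.
set m := loc_time_set x p j D.
have mj : (m <= j)%N by apply: lts_le.
pose f i := loc_time_set 0 w i D.
have f0 : f 0%N = 0%N by rewrite /f lts_0.
have fS i : (f i.+1 <= (f i).+1)%N by rewrite /f lts_S; case: (_ \in D); rewrite ?addn0 ?addn1.
have [i0 i0n fi0] : exists2 i, (i <= n)%N & f i = (t - m)%N.
  apply: ivt_nat => //; first by rewrite f0.
  by rewrite /f fn leq_subr.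
have exP : exists i, f i == (t - m)%N by exists i0; apply/eqP.
case: (ex_minnP exP) => n1 /eqP fn1 n1min.
have n1n : (n1 <= n)%N by apply: leq_trans (n1min _ (introT eqP fi0)) i0n.
have n1pos : (0 < n1)%N.
  case: n1 fn1 {n1min n1n} => [|//]; rewrite f0 => H; lia.
have Lcat i : loc_time_set x (p ++ w) (j + i) D = (m + f i)%N.
  by rewrite /j lts_cat px0.
exists (j + n1)%N; first by rewrite leq_add2l.
apply/andP; split.
  apply/and3P; split.
  - by rewrite addn_gt0 n1pos orbT.
  - by rewrite Lcat fn1; apply/eqP; lia.
  - apply/forallP => i; apply/implyP => i0'.
    case: (leqP i j) => Hij.
      rewrite lts_cat_le //; apply/eqP => E.
      have := @lts_le _ x p D i; lia.
    have -> : (nat_of_ord i) = (j + (i - j))%N by lia.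
    rewrite Lcat; apply/eqP => E.
    have : (n1 <= i - j)%N by apply: n1min; apply/eqP; lia.
    have := ltn_ord i; lia.
apply/asboolP.
have t0 : (0 < t)%N by lia.
have tp : 0 < t%:R :> R by rewrite ltr0n.
have HL y : loc_time 0 w n y = (loc_time 0%R w n1 y +
    \sum_(i < n - n1) ((walk_pos 0%R w (n1 + i) == y) : nat))%N.
  by rewrite /loc_time (sum_split_le _ _ (fun i => (walk_pos 0%R w i == y) : nat) n1n).
have Hsum : (\sum_(i < n - n1) ((walk_pos 0%R w (n1 + i) \in D) : nat))%N = m.
  have := fn; rewrite /loc_time_set (sum_split_le _ _ (fun i => (walk_pos 0%R w i \in D) : nat) n1n) => E.
  have : f n1 = (t - m)%N by [].
  rewrite /f /loc_time_set; lia.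
have Hmain := @close_main R d D g t r (m%:R / t%:R) (m%:R / t%:R)
  (loc_time 0%R w n) (loc_time x (p ++ w) (j + n1))
  (loc_time x p j) (fun y => (\sum_(i < n - n1) ((walk_pos 0%R w (n1 + i) == y) : nat))%N)
  (loc_time 0%R w n1) t0.
move: Hmain.
have HL' y : loc_time x (p ++ w) (j + n1) y = (loc_time x p j y + loc_time 0%R w n1 y)%N.
  by rewrite /j lt_cat px0.
move=> /(_ HL' HL Hc) Hm.
have Ha : (\esum_(y in D) ((loc_time x p j y)%:R / t%:R)%:E <= (m%:R / t%:R : R)%:E)%E.
  have H := esum_loc R d D x p 0 j t%:R tp; exact H.
have Hb : (\esum_(y in D) ((\sum_(i < n - n1) ((walk_pos 0%R w (n1 + i) == y) : nat))%:R / t%:R)%:E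
     <= (m%:R / t%:R : R)%:E)%E.
  by rewrite -[in X in (_ <= X)%E]Hsum; exact: (esum_loc R d D 0%R w n1 (n - n1) t%:R tp).
have {Hm}Hm := Hm Ha Hb.
move: Hm; rewrite /close_ev => Hm.
apply: (le_trans Hm); rewrite lee_fin; apply: arith => //; lia.
Qed.

End Core.

Section Main.
Variables (R : realType) (d : nat).
Implicit Types (D : set (Zd d)).

Lemma card_step : #|{: step d}| = (2 * d)%N.
Proof. by rewrite card_prod card_ord card_bool mulnC. Qed.

Lemma marg (b : seq (step d) -> bool) n M : (0 < d)%N -> (n <= M)%N ->
  \sum_(w : n.-tuple (step d) | b w) ((2 * d)%N%:R ^- n : R) =
  \sum_(w : M.-tuple (step d)) ((2 * d)%N%:R ^- M * (b (take n w))%:R).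
Proof.
move=> d0 nM.
rewrite -mulr_sumr (big_tuple_take R (step d) n M (fun u => (b u)%:R) nM) card_step.
rewrite big_mkcond mulrA mulr_sumr; apply: eq_bigr => w _.
have c0 : (2 * d)%N%:R != 0 :> R by rewrite pnatr_eq0 -lt0n muln_gt0.
have cu : ((2 * d)%N%:R : R) \is a GRing.unit by rewrite unitfE.
rewrite natrX (exprB nM cu).
case: (b w); last by rewrite !mulr0.
by rewrite mulr1 mulrA mulVf ?mul1r // expf_neq0.
Qed.

Lemma tau_uniq D t x (w : seq (step d)) n1 n2 :
  tau_is D t x w n1 -> tau_is D t x w n2 -> n1 = n2.
Proof.
move=> /and3P[p1 /eqP e1 /forallP f1] /and3P[p2 /eqP e2 /forallP f2].
case: (ltngtP n1 n2) => // H.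
- by have := f2 (Ordinal H); rewrite p1 /= e1 eqxx.
- by have := f1 (Ordinal H); rewrite p2 /= e2 eqxx.
Qed.


Definition inner D t (x : Zd d) (E : (Zd d -> nat) -> Prop) n : R :=
  \sum_(w : n.-tuple (step d) | tau_is D t x w n && `[< E (loc_time x w n) >])
     ((2 * d)%N%:R ^- n).

Definition bev D t (x : Zd d) (E : (Zd d -> nat) -> Prop) n (u : seq (step d)) : bool :=
  tau_is D t x u n && `[< E (loc_time x u n) >].

Lemma bev_take D t x E n (u : seq (step d)) : bev D t x E n (take n u) = bev D t x E n u.
Proof.
rewrite /bev tau_take (_ : loc_time x (take n u) n = loc_time x u n) //.
by apply/funext => y; apply: lt_take.
Qed.

Lemma pw D (g : Zd d -> R) t k r x j M (p : j.-tuple (step d)) (w : M.-tuple (step d)) :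
  (j <= k)%N -> (k < t)%N ->
  ((walk_pos x p j == 0) : nat)%:R *
    \sum_(n < M) (bev D t 0 (close_ev D g t r) n (take n w))%:R
  <= \sum_(n < j + M)
       (bev D t x (close_ev D g t (r + 4 * (k%:R / (t - k)%N%:R))) n (take n (p ++ w)))%:R :> R.
Proof.
move=> jk kt.
case: eqP => [px0 | _]; last by rewrite mul0r sumr_ge0.
rewrite mul1r.
case: (pickP (fun n : 'I_M => bev D t 0 (close_ev D g t r) n (take n w))) => [n0 Hn0 | Hnone];
  last by rewrite big1 ?sumr_ge0 // => n _; rewrite Hnone.
apply: (@le_trans _ _ 1).
  rewrite (bigD1 n0) //= Hn0 big1 ?addr0 // => i Hi.
  case E : (bev _ _ _ _ _ _) => //.
  move: E Hn0; rewrite !bev_take => /andP[T1 _] /andP[T2 _].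
  have E2 : i = n0 by apply: val_inj; exact: (tau_uniq _ _ _ _ _ _ T1 T2).
  by rewrite E2 eqxx in Hi.
move: Hn0; rewrite bev_take => /andP[Htau /asboolP Hc].
have sp : size p = j by rewrite size_tuple.
have pk : (size p <= k)%N by rewrite sp.
have px : walk_pos x p (size p) = 0 by rewrite sp.
have [n' n'le /andP[H1 H2]] := @core R d D g t k r x p w n0 pk kt px Htau Hc.
have n'lt : (n' < j + M)%N by rewrite -sp; apply: (leq_ltn_trans n'le); rewrite ltn_add2l.
rewrite (bigD1 (Ordinal n'lt)) //= bev_take /bev H1 H2 /=.
by rewrite lerDl sumr_ge0.
Qed.

Lemma key D (g : Zd d -> R) t k r x j M : (0 < d)%N -> (j <= k)%N -> (k < t)%N ->
  hit_prob (R:=R) x j 0 * \sum_(n < M) inner D t 0 (close_ev D g t r) n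
  <= \sum_(n < j + M) inner D t x (close_ev D g t (r + 4 * (k%:R / (t - k)%N%:R))) n.
Proof.
move=> d0 jk kt.
set c := (2 * d)%N%:R : R.
have cpos : 0 < c by rewrite ltr0n muln_gt0.
set E := close_ev D g t r.
set E' := close_ev D g t (r + 4 * (k%:R / (t - k)%N%:R)).
have Eq (y : Zd d) F N : \sum_(n < N) inner D t y F n =
    \sum_(w : N.-tuple (step d)) c ^- N * \sum_(n < N) (bev D t y F n (take n w))%:R.
  rewrite (eq_bigr (fun n : 'I_N => \sum_(w : N.-tuple (step d)) c ^- N * (bev D t y F n (take n w))%:R)); last first.
    by move=> n _; have H := marg (bev D t y F n) n N d0 (ltnW (ltn_ord n)); exact H.
  by rewrite exchange_big; apply: eq_bigr => w _; rewrite mulr_sumr.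
have hit : hit_prob (R:=R) x j 0 = \sum_(p : j.-tuple (step d)) c ^- j * ((walk_pos x p j == 0) : nat)%:R.
  by rewrite /hit_prob big_mkcond; apply: eq_bigr => p _; case: eqP; rewrite ?mulr1 ?mulr0.
rewrite !Eq hit mulr_suml.
rewrite -(big_tuple_cat R (step d) j M (fun v => c ^- (j + M) * \sum_(n < j + M) (bev D t x E' n (take n v))%:R)).
apply: ler_sum => p _; rewrite mulr_sumr; apply: ler_sum => w _.
rewrite mulrACA exprD invfM; apply: ler_wpM2l.
  by rewrite mulr_ge0 // invr_ge0 exprn_ge0 // ltW.
exact: pw.
Qed.

End Main.


Theorem proposition3p7 (R : realType) (d : nat) (D : set (Zd d)) (g : Zd d -> R)
  (k t : nat) (r : R) (x : Zd d) :
  (0 < d)%N ->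
  (l1normD D g < +oo)%E ->
  (0 < k)%N -> (k < t)%N -> 0 < r ->
  Dbar D x ->
  (stopped_prob D t (0%R : Zd d) (close_ev D g t r)
     * (hit_prob (R:=R) x k (0%R : Zd d) + hit_prob (R:=R) x k.-1 (0%R : Zd d))%R%:E
   <= 2%:E * stopped_prob D t x (close_ev D g t (r + 4 * (k%:R / (t - k)%N%:R))%R))%E.
Proof.
move=> d0 _ k0 kt r0 _.
set E := close_ev D g t r.
set E' := close_ev D g t (r + 4 * (k%:R / (t - k)%N%:R)).
have hit_ge0 j : 0 <= hit_prob (R:=R) x j 0.
  by rewrite /hit_prob sumr_ge0 // => *; rewrite invr_ge0 exprn_ge0.
have inner_ge0 y F n : 0 <= inner R d D t y F n.
  by rewrite /inner sumr_ge0 // => *; rewrite invr_ge0 exprn_ge0.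
have SPx N : ((\sum_(n < N) inner R d D t x E' n)%:E <= stopped_prob D t x E')%E.
  rewrite -sumEFin -(big_mkord xpredT (fun n => (inner R d D t x E' n)%:E)).
  have H := @nneseries_lim_ge R (fun n => (inner R d D t x E' n)%:E) xpredT 0%N N
    (fun n _ _ => inner_ge0 x E' n).
  exact H.
set c := hit_prob (R:=R) x k 0 + hit_prob (R:=R) x k.-1 0.
have c0 : 0 <= c by rewrite addr_ge0.
rewrite muleC.
have -> : (c%:E * stopped_prob (R:=R) D t (0%R : Zd d) E =
   \sum_(0 <= n <oo | xpredT n) (c%:E * (inner R d D t 0%R E n)%:E))%E.
  rewrite nneseriesZl //; move=> n _; rewrite lee_fin; exact: inner_ge0.
apply: (lime_le (is_cvg_nneseries _)).
  by move=> n _ _; rewrite mule_ge0 // lee_fin.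
apply: nearW => N.
rewrite big_mkord.
under eq_bigr do rewrite -EFinM.
rewrite sumEFin -mulr_sumr /c mulrDl EFinD.
have -> : (2%:E * stopped_prob (R:=R) D t x E' = stopped_prob (R:=R) D t x E' + stopped_prob (R:=R) D t x E')%E.
  have e2 : (2%R : R)%:E = (1%:E + 1%:E)%E by rewrite -EFinD.
  rewrite e2.
  by rewrite ge0_muleDl ?lee_fin // mul1e.
apply: leeD.
- apply: le_trans (SPx (k + N)%N); rewrite lee_fin; apply: key => //.
- apply: le_trans (SPx (k.-1 + N)%N); rewrite lee_fin; apply: key => //.
  by rewrite leq_pred.
Qed.
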